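(* Let $\mathcal U$ be any nonprincipal ultrafilter on $\mathbb{N}$. There exists $r\in({}^{\star}\mathbb{R}_{\mathcal F})_F$ such that $i(r)=0$ in $\mathbb{R}_{\mathcal F}^{\circ}$ and $j(r)\neq 0$ in ${}^{\star}\mathbb{R}$.
   Context: $\mathcal F$ is the Fréchet filter of cofinite subsets of $\mathbb{N}$. Henle's ring ${}^{\star}\mathbb{R}_{\mathcal F}=\mathbb{R}^{\mathbb{N}}/\mathcal F$: classes $[x]_{\mathcal F}$ of real sequences identified when equal for all but finitely many $n$, with pointwise operations and order $[x]_{\mathcal F}\le[y]_{\mathcal F}$ iff $\{n:x_n\le y_n\}\in\mathcal F$; $({}^{\star}\mathbb{R}_{\mathcal F})_F$ is its subring of finite elements ($-n\le r\le n$ for some $n\in\mathbb{N}$). ${}^{\star}\mathbb{R}=\mathbb{R}^{\mathbb{N}}/\mathcal U$ is the hyperreal field (sequences identified when they agree on a set in $\mathcal U$). With $\mathbb{R}^{\mathbb{N}}_B$ the ring of bounded real sequences and $o=\{f\in\mathbb{R}^{\mathbb{N}}:\lim_{n\to\infty}nf(n)=0\}$ (an ideal of $\mathbb{R}^{\mathbb{N}}_B$), $\mathbb{R}_{\mathcal F}^{\circ}=\mathbb{R}^{\mathbb{N}}_B/o$. The homomorphisms are $i:({}^{\star}\mathbb{R}_{\mathcal F})_F\to\mathbb{R}_{\mathcal F}^{\circ}$, $i([x]_{\mathcal F})=[x]_o$, and $j:{}^{\star}\mathbb{R}_{\mathcal F}\to{}^{\star}\mathbb{R}$, $j([x]_{\mathcal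 F})=[x]_{\mathcal U}$. *)

(* Defs.v *)
From Stdlib Require Import Reals.
Open Scope R_scope.

Definition cofinite (A : nat -> Prop) : Prop :=
  exists N : nat, forall n : nat, (N <= n)%nat -> A n.

(* Frechet filter equivalence: x =_F y iff they agree for all but finitely many n. *)
Definition eqF (x y : nat -> R) : Prop := cofinite (fun n => x n = y n).

Definition finiteF (x : nat -> R) : Prop :=
  exists k : nat, cofinite (fun n => - INR k <= x n <= INR k).

Definition bounded_seq (f : nat -> R) : Prop :=
  exists M : R, forall n : nat, Rabs (f n) <= M.

Definition in_o (f : nat -> R) : Prop := Un_cv (fun n => INR n * f n) 0.

Definition is_ultrafilter (U : (nat -> Prop) -> Prop) : Prop :=
  U (fun _ => True) /\
  ~ U (fun _ => False) /\
  (forall A B : nat -> Prop, U A -> (forall n, A n -> B n) -> U B) /\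
  (forall A B : nat -> Prop, U A -> U B -> U (fun n => A n /\ B n)) /\
  (forall A : nat -> Prop, U A \/ U (fun n => ~ A n)).

Definition nonprincipal (U : (nat -> Prop) -> Prop) : Prop :=
  forall m : nat, ~ U (fun n => n = m).

(* i([x]_F) = 0 in R_F^o : every bounded representative of [x]_F lies in o. *)
Definition i_zero (x : nat -> R) : Prop :=
  forall y : nat -> R, bounded_seq y -> eqF x y -> in_o y.

(* j([x]_F) = [x]_U = 0 in *R : x agrees with 0 on a set in U. *)
Definition j_zero (U : (nat -> Prop) -> Prop) (x : nat -> R) : Prop :=
  U (fun n => x n = 0).

(* Main.v *)
Require Import Defs.
From Stdlib Require Import Reals.
From Stdlib Require Import Lra Lia.
Open Scope R_scope.

Lemma key (a b : R) : 0 < b -> b <= a -> a * / ((a+1)*(a+1)) < / b.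
Proof.
  intros Hb Hba.
  assert (Hp : 0 < (a+1)*(a+1)) by nra.
  apply (Rmult_lt_reg_r ((a+1)*(a+1) * b)); [nra|].
  replace (a * / ((a + 1) * (a + 1)) * ((a + 1) * (a + 1) * b)) with (a*b) by (field; lra).
  replace (/ b * ((a + 1) * (a + 1) * b)) with ((a+1)*(a+1)) by (field; lra).
  nra.
Qed.

Theorem mainTheorem6 (U : (nat -> Prop) -> Prop) :
  is_ultrafilter U -> nonprincipal U ->
  exists x : nat -> R, finiteF x /\ i_zero x /\ ~ j_zero U x.
Proof.
  intros [HT [HF [Hm _]]] _.
  exists (fun n => / ((INR n + 1) * (INR n + 1))).
  split; [|split].
  - exists 1%nat. exists 0%nat. intros n _. simpl.
    pose proof (pos_INR n).
    assert (Hp : 1 <= (INR n + 1) * (INR n + 1)) by nra.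
    split.
    + left. apply Rlt_le_trans with 0; [lra|]. left; apply Rinv_0_lt_compat; lra.
    + rewrite <- Rinv_1. apply Rinv_le_contravar; lra.
  - intros y _ [N0 HN0] eps Heps.
    destruct (archimed_cor1 eps Heps) as [N [HN HNpos]].
    exists (Nat.max N0 N). intros n Hn.
    rewrite <- HN0 by lia.
    unfold R_dist. rewrite Rminus_0_r.
    pose proof (pos_INR n).
    assert (HNn : INR N <= INR n) by (apply le_INR; lia).
    assert (HN0' : 0 < INR N) by (apply lt_0_INR; lia).
    rewrite Rabs_right.
    + eapply Rlt_trans; [apply key; eauto|]. exact HN.
    + apply Rle_ge, Rmult_le_pos; [lra|]. left; apply Rinv_0_lt_compat; nra.
  - intros HU. apply HF. apply (Hm _ _ HU). intros n Hn.
    pose proof (pos_INR n).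
    assert (0 < / ((INR n + 1) * (INR n + 1))) by (apply Rinv_0_lt_compat; nra).
    lra.
Qed.
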